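(* Consider U-PB$(\hat x_0,\chi,\lambda_0,\bar\varepsilon,\overline N)$ described in the context. Let $j$ be an iteration of a cycle with prox stepsize $\lambda$ and first iteration $i$, and suppose $t_j>(1-\chi)\bar\varepsilon/2$. Then \[ j-i<(1+u_\lambda)\log\left(\frac{4t_i}{(1-\chi)\bar\varepsilon}\right),\qquad u_\lambda:=\frac{4\lambda[2M_f^2+(1-\chi)\bar\varepsilon L_f]}{(1-\chi)\bar\varepsilon}. \]
   Context: Setting: $f,h:\mathbb{R}^n\to\mathbb{R}\cup\{+\infty\}$ proper lsc convex, $\mathrm{dom}\, h\subseteq\mathrm{dom}\, f$, $\phi=f+h$, $\phi_*=\inf\phi$ attained. Subgradient oracle $f'(x)\in\partial f(x)$ on $\mathrm{dom}\, h$ with $\|f'(x)-f'(y)\|\le2M_f+L_f\|x-y\|$ for $x,y\in\mathrm{dom}\, h$, $M_f,L_f\ge0$. $\ell_f(u;x):=f(x)+\langle f'(x),u-x\rangle$. ''Convex function'' means proper lsc convex on $\mathbb{R}^n$. BU$(x^c,x,m_f,\lambda)$: given $\lambda>0$, convex $m_f\le f$ with $x=\mathrm{argmin}_u\{m_f(u)+h(u)+\frac1{2\lambda}\|u-x^c\|^2\}$, outputs any convex $m_f^+$ with $\max\{\overline m_f,\ell_f(\cdot;x)\}\le m_f^+\le f$, where $\overline m_f\le f$, $\overline m_f(x)=m_f(x)$ and $x=\mathrm{argmin}_u\{\overline m_f(u)+h(u)+\frac1{2\lambda}\|u-x^c\|^2\}$. U-PB$(\hat x_0,\chi,\lambda_0,\bar\varepsilon,\overline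 N)$, inputs in $\mathrm{dom}\, h\times[0,1)\times\mathbb{R}_{++}\times\mathbb{R}_{++}\times\{1,2,\ldots\}$: Step 0: $\lambda=\lambda_0$, $N=0$, $j=1$, $k=1$; choose convex $f_1$ with $\ell_f(\cdot;\hat x_0)\le f_1\le f$. Step 1: $x_j=\mathrm{argmin}_u\{(f_j+h)(u)+\frac1{2\lambda}\|u-\hat x_{k-1}\|^2\}$; if $\phi(x_j)-\phi_*\le\bar\varepsilon$ stop. Step 2: $\bar\phi_j=\phi(x_j)+\frac\chi{2\lambda}\|x_j-\hat x_{k-1}\|^2$ if $N=0$, else $\bar\phi_j=\min\{\bar\phi_{j-1},\phi(x_j)+\frac\chi{2\lambda}\|x_j-\hat x_{k-1}\|^2\}$; $N=N+1$; $t_j=\bar\phi_j-[(f_j+h)(x_j)+\frac1{2\lambda}\|x_j-\hat x_{k-1}\|^2]$. Step 3: if $t_j>(1-\chi)\bar\varepsilon/2$ and $N<\overline N$: null update $f_{j+1}=\mathrm{BU}(\hat x_{k-1},x_j,f_j,\lambda)$. Otherwise: if $t_j>(1-\chi)\bar\varepsilon/2$ and $N=\overline N$, reset update $\lambda\leftarrow\lambda/2$; else serious update $\hat x_k=x_j$, $\lambda_k=\lambda$, $k\leftarrow k+1$; then set $N=0$ and choose convex $f_{j+1}$ with $\ell_f(\cdot;\hat x_{k-1})\le f_{j+1}\le f$. Step 4: $j\leftarrow j+1$, go to Step 1. A cycle is a reset or serious iteration together with all consecutive null iterations immediately preceding it; its iterations share the same prox stepsize $\lambda$ and prox-center $\hat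 x_{k-1}$, and its first iteration is the one at which $N=0$ when entering Step 2. *)

(* Defs.v *)
(* R : realType, vectors of R^n are 'rV[R]_n,
   extended-real valued functions R^n -> R U {+oo} are modelled as 'rV[R]_n -> \bar R
   (properness excludes the value -oo). *)
From mathcomp Require Import all_boot all_order all_algebra.
From mathcomp Require Import all_classical all_reals all_analysis.
Set Implicit Arguments. Unset Strict Implicit. Unset Printing Implicit Defensive.
Import Order.TTheory GRing.Theory Num.Theory.
Import numFieldNormedType.Exports.
Local Open Scope ring_scope.
Local Open Scope classical_set_scope.

Section UPB.
Variables (R : realType) (n : nat).
Local Notation vec := ('rV[R]_n).

Definition dotv (u v : vec) : R := \sum_(i < n) u 0 i * v 0 i.
Definition norm2 (u : vec) : R := Num.sqrt (dotv u u).

Definition edom (f : vec -> \bar R) : set vec := [set x | (f x < +oo)%E].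

Definition proper_fun (f : vec -> \bar R) : Prop :=
  (forall x, f x <> -oo%E) /\ exists x, (f x < +oo)%E.

Definition lsc_fun (f : vec -> \bar R) : Prop :=
  forall (a : R) (u : nat -> vec) (x : vec),
    (fun k => norm2 (u k - x)) @ \oo --> 0%R ->
    (forall k, (f (u k) <= a%:E)%E) -> (f x <= a%:E)%E.

Definition convex_fun (f : vec -> \bar R) : Prop :=
  forall (x y : vec) (s : R), 0 < s < 1 ->
    (f (s *: x + (1 - s) *: y)%R <= s%:E * f x + (1 - s)%:E * f y)%E.

(* "convex function" = proper lsc convex function on R^n *)
Definition cvx (f : vec -> \bar R) : Prop :=
  [/\ proper_fun f, lsc_fun f & convex_fun f].

Definition fle (f g : vec -> \bar R) : Prop := forall u, (f u <= g u)%E.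

Definition subgrad (f : vec -> \bar R) (x g : vec) : Prop :=
  (f x < +oo)%E /\ forall u, (f x + (dotv g (u - x))%:E <= f u)%E.

Definition is_argmin (F : vec -> \bar R) (x : vec) : Prop :=
  forall u, (F x <= F u)%E.

Definition lin (f : vec -> \bar R) (f' : vec -> vec) (x : vec) : vec -> \bar R :=
  fun u => (f x + (dotv (f' x) (u - x))%:E)%E.

Definition proxobj (m h : vec -> \bar R) (lam : R) (xc : vec) : vec -> \bar R :=
  fun u => (m u + h u + (norm2 (u - xc) ^+ 2 / (2 * lam))%:E)%E.

Definition BU_out (f h : vec -> \bar R) (f' : vec -> vec)
    (xc x : vec) (m : vec -> \bar R) (lam : R) (mplus : vec -> \bar R) : Prop :=
  cvx mplus /\
  exists mbar : vec -> \bar R,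
    [/\ cvx mbar /\ fle mbar f, mbar x = m x,
        is_argmin (proxobj mbar h lam xc) x,
        fle (fun u => maxe (mbar u) (lin f f' x u)) mplus & fle mplus f].

(* A run of U-PB(x0hat, chi, lam0, eps, Nbar) in which iterations 1..J reach Step 2
   (i.e. the algorithm has not stopped at Step 1 of any iteration j <= J).
   For iteration j >= 1:
     lam j  = prox stepsize used at iteration j,
     ctr j  = prox center  \hat x_{k-1} used at iteration j,
     mdl j  = bundle model f_j,
     x j    = x_j,
     Nc j   = value of the counter N when entering Step 2 of iteration j,
     pb j   = \bar\phi_j,   t j = t_j. *)
Definition UPB_run (f h : vec -> \bar R) (f' : vec -> vec) (phistar : R)
    (x0hat : vec) (chi lam0 eps : R) (Nbar : nat) (J : nat)
    (lam : nat -> R) (ctr : nat -> vec) (mdl : nat -> vec -> \bar R)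
    (x : nat -> vec) (Nc : nat -> nat) (pb t : nat -> R) : Prop :=
  let phi := fun u => (f u + h u)%E in
  let thr := (1 - chi) * eps / 2 in
  [/\
   [/\ lam 1%N = lam0, ctr 1%N = x0hat, Nc 1%N = 0%N,
       cvx (mdl 1%N) & fle (lin f f' x0hat) (mdl 1%N) /\ fle (mdl 1%N) f],
   (forall j, (1 <= j <= J)%N ->
     [/\ is_argmin (proxobj (mdl j) h (lam j) (ctr j)) (x j),
         ~ (phi (x j) - phistar%:E <= eps%:E)%E,
         (pb j)%:E = (if Nc j == 0%N
                      then phi (x j) + (chi / (2 * lam j) * norm2 (x j - ctr j) ^+ 2)%:E
                      else mine (pb j.-1)%:E
                             (phi (x j) + (chi / (2 * lam j) * norm2 (x j - ctr j) ^+ 2)%:E))%E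
       & (t j)%:E = ((pb j)%:E - (mdl j (x j) + h (x j)
                       + (norm2 (x j - ctr j) ^+ 2 / (2 * lam j))%:E))%E])
   &
   (forall j, (1 <= j < J)%N ->
     if (thr < t j) && (Nc j + 1 < Nbar)%N then
       (* null update *)
       [/\ lam j.+1 = lam j, ctr j.+1 = ctr j, Nc j.+1 = (Nc j + 1)%N
         & BU_out f h f' (ctr j) (x j) (mdl j) (lam j) (mdl j.+1)]
     else if thr < t j then
       (* reset update (here N = Nbar) *)
       [/\ lam j.+1 = lam j / 2, ctr j.+1 = ctr j, Nc j.+1 = 0%N,
           cvx (mdl j.+1) & fle (lin f f' (ctr j.+1)) (mdl j.+1) /\ fle (mdl j.+1) f]
     else
       (* serious update *)
       [/\ lam j.+1 = lam j, ctr j.+1 = x j, Nc j.+1 = 0%N,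
           cvx (mdl j.+1) & fle (lin f f' (ctr j.+1)) (mdl j.+1) /\ fle (mdl j.+1) f])].

End UPB.

(* Main.v *)
Require Import Defs.
From mathcomp Require Import all_boot all_order all_algebra.
From mathcomp Require Import all_classical all_reals all_analysis.
From mathcomp Require Import ring lra.
Import Order.TTheory GRing.Theory Num.Theory.
Local Open Scope ring_scope.
Local Open Scope classical_set_scope.

Section Helpers.
Variables (R : realType) (n : nat).
Local Notation vec := ('rV[R]_n).

Lemma dotvDl (a b c : vec) : dotv (a + b) c = dotv a c + dotv b c.
Proof. rewrite /dotv -big_split; apply: eq_bigr => k _; by rewrite !mxE mulrDl. Qed.

Lemma dotvZl (s : R) (a b : vec) : dotv (s *: a) b = s * dotv a b.
Proof. rewrite /dotv mulr_sumr; apply: eq_bigr => k _; by rewrite !mxE mulrA. Qed.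

Lemma dotvC (a b : vec) : dotv a b = dotv b a.
Proof. rewrite /dotv; by apply: eq_bigr => k _; rewrite mulrC. Qed.

Lemma dotvNl (a b : vec) : dotv (- a) b = - dotv a b.
Proof. by rewrite -scaleN1r dotvZl mulN1r. Qed.

Lemma dotvBl (a b c : vec) : dotv (a - b) c = dotv a c - dotv b c.
Proof. by rewrite dotvDl dotvNl. Qed.

Lemma dotvDr (a b c : vec) : dotv c (a + b) = dotv c a + dotv c b.
Proof. by rewrite dotvC dotvDl !(dotvC c). Qed.

Lemma dotvZr (s : R) (a b : vec) : dotv b (s *: a) = s * dotv b a.
Proof. by rewrite dotvC dotvZl dotvC. Qed.

Lemma dotvBr (a b c : vec) : dotv c (a - b) = dotv c a - dotv c b.
Proof. by rewrite dotvC dotvBl !(dotvC c). Qed.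

Lemma dotv_ge0 (a : vec) : 0 <= dotv a a.
Proof. rewrite /dotv; apply: sumr_ge0 => k _; by rewrite -expr2 sqr_ge0. Qed.

Lemma norm2_ge0 (a : vec) : 0 <= norm2 a.
Proof. exact: sqrtr_ge0. Qed.

Lemma norm2_sq (a : vec) : norm2 a ^+ 2 = dotv a a.
Proof. by rewrite /norm2 sqr_sqrtr // dotv_ge0. Qed.

Lemma cauchy_schwarz (a b : vec) : dotv a b <= norm2 a * norm2 b.
Proof.
set A := dotv a a; set B := dotv b b; set C := dotv a b.
have key s : 0 <= s ^+ 2 * A - 2 * s * C + B.
  have := dotv_ge0 (s *: a - b).
  rewrite dotvBl !dotvBr !dotvZl !dotvZr (dotvC b a) -/A -/B -/C.
  by congr (_ <= _); ring.
have A0 : 0 <= A by apply: dotv_ge0.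
have B0 : 0 <= B by apply: dotv_ge0.
have [C0|C0] := lerP C 0.
  by apply: le_trans C0 _; apply: mulr_ge0; apply: norm2_ge0.
have CAB : C ^+ 2 <= A * B.
  have [A00|Apos] := eqVneq A 0.
    have := key ((B + 1) / (2 * C)).
    rewrite A00 mulr0 add0r.
    have -> : 2 * ((B + 1) / (2 * C)) * C = B + 1.
      by field; apply/negP => /eqP h; rewrite h in C0; rewrite ltxx in C0.
    lra.
  have Ap : 0 < A by rewrite lt_neqAle eq_sym Apos A0.
  have := key (C / A).
  have -> : (C / A) ^+ 2 * A - 2 * (C / A) * C + B = B - C ^+ 2 / A.
    by field.
  rewrite subr_ge0 ler_pdivrMr // => h; lra.
rewrite /norm2 -/A -/B -sqrtrM // -(@ger0_norm _ C); last exact: ltW.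
by rewrite -sqrtr_sqr ler_sqrt // ?mulr_ge0.
Qed.


Lemma small_s (D K : R) : 0 <= K ->
  (forall s : R, 0 < s < 1 -> s * D <= s ^+ 2 * K) -> D <= 0.
Proof.
move=> K0 H; rewrite leNgt; apply/negP => D0.
set s := D / (2 * (D + K + 1)).
have den : 0 < 2 * (D + K + 1) by lra.
have s0 : 0 < s by apply: divr_gt0.
have s1 : s * (2 * (D + K + 1)) = D by rewrite /s mulrVK //; apply: unitf_gt0.
have s01 : 0 < s < 1.
  apply/andP; split => //.
  have : s * (2 * (D + K + 1)) < 1 * (2 * (D + K + 1)) by rewrite s1; lra.
  by rewrite ltr_pM2r.
have := H s s01.
rewrite expr2 -mulrA ler_pM2l // => h.
have : s * K < D.
  have : s * K * (2 * (D + K + 1)) < D * (2 * (D + K + 1)).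
    rewrite mulrAC s1; nra.
  by rewrite ltr_pM2r.
lra.
Qed.

Lemma strong_cvx {mb h : vec -> \bar R} {lam : R} {c x u : vec} {a1 a2 b1 b2 : R} :
  convex_fun mb -> convex_fun h -> 0 < lam ->
  is_argmin (proxobj mb h lam c) x ->
  mb x = a1%:E -> h x = a2%:E -> mb u = b1%:E -> h u = b2%:E ->
  a1 + a2 + norm2 (x - c) ^+ 2 / (2 * lam) + norm2 (u - x) ^+ 2 / (2 * lam)
    <= b1 + b2 + norm2 (u - c) ^+ 2 / (2 * lam).
Proof.
move=> cm ch l0 hmin ea1 ea2 eb1 eb2.
rewrite !norm2_sq.
set P := dotv (x - c) (x - c); set W := dotv (u - x) (u - x); set C := dotv (x - c) (u - x).
set il := (2 * lam)^-1.
have il0 : 0 < il by rewrite invr_gt0; lra.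
have eU : dotv (u - c) (u - c) = P + 2 * C + W.
  have -> : u - c = (x - c) + (u - x) by apply/rowP => k; rewrite !mxE; ring.
  rewrite dotvDl !(dotvDr (x - c) (u - x)) (dotvC (u - x) (x - c)) -/P -/W -/C; ring.
have W0 : 0 <= W by apply: dotv_ge0.
have key : forall s, 0 < s < 1 -> s * (a1 + a2 - b1 - b2 - 2 * C * il) <= s ^+ 2 * (W * il).
  move=> s s01.
  have := hmin (s *: u + (1 - s) *: x).
  rewrite /proxobj ea1 ea2.
  have es : s *: u + (1 - s) *: x - c = (x - c) + s *: (u - x).
    by apply/rowP => k; rewrite !mxE; ring.
  rewrite es !norm2_sq !(dotvDl (x - c) (s *: (u - x))) !(dotvDr (x - c) (s *: (u - x))) !dotvZl !dotvZr (dotvC (u - x) (x - c)) -/P -/W -/C.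
  have hm := cm u x s s01; rewrite eb1 ea1 in hm.
  have hh := ch u x s s01; rewrite eb2 ea2 in hh.
  rewrite -!EFinM -!EFinD in hm hh.
  move=> H.
  have H2 := le_trans H (leeD (leeD hm hh) (lexx _)).
  rewrite -!EFinD lee_fin in H2.
  rewrite -/il in H2.
  have E : s * (a1 + a2 - b1 - b2 - 2 * C * il) - s ^+ 2 * (W * il) =
    (a1 + a2 + P * il) - (s * b1 + (1 - s) * a1 + (s * b2 + (1 - s) * a2) +
      (P + s * C + (s * C + s * (s * W))) * il) by ring.
  rewrite -subr_le0 E subr_le0 //.
have D0 := small_s _ _ (mulr_ge0 W0 (ltW il0)) key.
rewrite eU -/il; nra.
Qed.


Lemma fin_split {a b : \bar R} {p q t : R} : a <> -oo%E -> b <> -oo%E ->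
  t%:E = (p%:E - (a + b + q%:E))%E -> exists ra rb, a = ra%:E /\ b = rb%:E.
Proof.
case: a => [ra| |]; case: b => [rb| |] //= _ _; try by exists ra, rb.
Qed.


Lemma cvx_nm {g : vec -> \bar R} y : cvx g -> g y <> -oo%E.
Proof. by case=> [[nm _] _ _]. Qed.

Lemma fin_of {g : vec -> \bar R} {y} : g y <> -oo%E -> (g y < +oo)%E -> exists r, g y = r%:E.
Proof. by case: (g y) => [r| |] // _ _; exists r. Qed.

Lemma null_step (f h mdl0 mdl1 : vec -> \bar R) (f' : vec -> vec) (M L chi eps lam : R)
  (c x0 x1 : vec) (pb0 pb1 t0 t1 : R) :
  cvx f -> cvx h -> edom h `<=` edom f -> 0 <= M -> 0 <= L ->
  (forall u, u \in edom h -> subgrad f u (f' u)) ->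
  (forall u v, u \in edom h -> v \in edom h ->
     norm2 (f' u - f' v) <= 2 * M + L * norm2 (u - v)) ->
  0 <= chi < 1 -> 0 < eps -> 0 < lam ->
  t0%:E = (pb0%:E - (mdl0 x0 + h x0 + (norm2 (x0 - c) ^+ 2 / (2 * lam))%:E))%E ->
  t1%:E = (pb1%:E - (mdl1 x1 + h x1 + (norm2 (x1 - c) ^+ 2 / (2 * lam))%:E))%E ->
  pb1%:E = mine pb0%:E (f x1 + h x1 + (chi / (2 * lam) * norm2 (x1 - c) ^+ 2)%:E)%E ->
  BU_out f h f' c x0 mdl0 lam mdl1 ->
  (1 + 4 * lam * (2 * M ^+ 2 + (1 - chi) * eps * L) / ((1 - chi) * eps))
      * (t1 - (1 - chi) * eps / 4)
   <= 4 * lam * (2 * M ^+ 2 + (1 - chi) * eps * L) / ((1 - chi) * eps)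
      * (t0 - (1 - chi) * eps / 4).
Proof.
move=> cf ch dom M0 L0 sg lip /andP[chi0 chi1] e0 l0 et0 et1 epb
  [cm1 [mb [[cmb mbf] emb amin hmax m1f]]].
rewrite -emb in et0.
have [a1 [a2 [ea1 ea2]]] := fin_split (cvx_nm x0 cmb) (cvx_nm x0 ch) et0.
have [m1 [b2 [em1 eb2]]] := fin_split (cvx_nm x1 cm1) (cvx_nm x1 ch) et1.
have hb1 : (mb x1 <= m1%:E)%E.
  by rewrite -em1; apply: le_trans (hmax x1); rewrite le_max lexx.
have [b1 eb1] : exists b1, mb x1 = b1%:E.
  apply: fin_of; first exact: cvx_nm.
  by apply: le_lt_trans hb1 _; apply: ltry.
have hx0 : x0 \in edom h by apply: mem_set; rewrite /edom /= ea2 ltry.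
have hx1 : x1 \in edom h by apply: mem_set; rewrite /edom /= eb2 ltry.
have [sg0f sg0] := sg _ hx0.
have [sg1f sg1] := sg _ hx1.
have [r0 er0] := fin_of (cvx_nm x0 cf) sg0f.
have [r1 er1] := fin_of (cvx_nm x1 cf) sg1f.
have cvmb : convex_fun mb by case: cmb.
have cvh : convex_fun h by case: ch.
have S := strong_cvx cvmb cvh l0 amin ea1 ea2 eb1 eb2.
have Lin : r0 + dotv (f' x0) (x1 - x0) <= m1.
  rewrite -lee_fin EFinD -er0 -em1; apply: le_trans (hmax x1).
  by rewrite le_max lexx orbT.
have Mb : b1 <= m1 by rewrite -lee_fin -eb1.
have Pb0 : pb1 <= pb0 by rewrite -lee_fin epb ge_min lexx.
have Pb1 : pb1 <= r1 + b2 + chi / (2 * lam) * norm2 (x1 - c) ^+ 2.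
  by rewrite -lee_fin epb !EFinD -er1 -eb2 ge_min lexx orbT.
have Sg1 : r1 + dotv (f' x1) (x0 - x1) <= r0.
  by rewrite -lee_fin EFinD -er1 -er0; apply: sg1.
have Lip := lip _ _ hx1 hx0.
have CS := cauchy_schwarz (f' x1 - f' x0) (x1 - x0).
have E1 : dotv (f' x1) (x0 - x1) = - dotv (f' x1) (x1 - x0).
  have -> : x0 - x1 = - (x1 - x0) by rewrite opprB.
  by rewrite dotvC dotvNl dotvC.
have E2 : dotv (f' x1 - f' x0) (x1 - x0) = dotv (f' x1) (x1 - x0) - dotv (f' x0) (x1 - x0).
  by rewrite dotvBl.
have T0 : t0 = pb0 - (a1 + a2 + norm2 (x0 - c) ^+ 2 / (2 * lam)).
  by apply/eqP; rewrite -eqe et0 ea1 ea2 EFinB !EFinD.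
have T1 : t1 = pb1 - (m1 + b2 + norm2 (x1 - c) ^+ 2 / (2 * lam)).
  by apply/eqP; rewrite -eqe et1 em1 eb2 EFinB !EFinD.

have e0' : 0 < (1 - chi) * eps by apply: mulr_gt0; lra.
set e := (1 - chi) * eps in e0' *.
set u := 4 * lam * (2 * M ^+ 2 + e * L) / e.
have u0 : 0 <= u.
  rewrite /u; apply: divr_ge0; last lra.
  apply: mulr_ge0; first lra.
  by apply: addr_ge0; [apply: mulr_ge0; [lra | apply: sqr_ge0] | apply: mulr_ge0; lra].
have D0 : 0 <= norm2 (x1 - x0) by apply: norm2_ge0.
set D := norm2 (x1 - x0) in D0 S Lip CS *.
set il := (2 * lam)^-1.
have il0 : 0 < il by rewrite invr_gt0; lra.
have K1 : u * (D ^+ 2 * il) = 4 * M ^+ 2 * D ^+ 2 / e + 2 * L * D ^+ 2.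
  rewrite /u /il; field; apply/andP; split; apply/negP => /eqP; lra.
have K2 : 2 * M * D <= e / 4 + 4 * M ^+ 2 * D ^+ 2 / e.
  have h1 : 0 <= (e / 2 - 2 * M * D) ^+ 2 by apply: sqr_ge0.
  have -> : e / 4 + 4 * M ^+ 2 * D ^+ 2 / e = 2 * M * D + (e / 2 - 2 * M * D) ^+ 2 / e.
    by field; apply/negP => /eqP; lra.
  rewrite lerDl; apply: divr_ge0 => //; lra.
have G : dotv (f' x1 - f' x0) (x1 - x0) <= (2 * M + L * D) * D.
  by apply: le_trans CS _; apply: ler_wpM2r.
have U1 : u * pb1 <= u * pb0 by apply: ler_wpM2l.
have U2 := ler_wpM2l u0 S.
have U3 : u * b1 <= u * m1 by apply: ler_wpM2l.
have N1p : 0 <= (1 - chi) * (norm2 (x1 - c) ^+ 2 * il).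
  by apply: mulr_ge0; [lra | apply: mulr_ge0; [apply: sqr_ge0 | lra]].
have LD : 0 <= L * D ^+ 2 by apply: mulr_ge0 => //; apply: sqr_ge0.
rewrite T0 T1.
rewrite E2 in G. rewrite E1 in Sg1.
move: Pb1; rewrite -/il mulrAC => Pb1.
move: U2 K1 K2 G U1 U3 N1p LD Pb1 Sg1 Lin Mb.
rewrite -/il.
set N1 := norm2 (x1 - c) ^+ 2. set N0 := norm2 (x0 - c) ^+ 2.
set g0 := dotv (f' x0) (x1 - x0). set g1 := dotv (f' x1) (x1 - x0).
set Z := 4 * M ^+ 2 * D ^+ 2 / e.
move=> *.
nra.
Qed.

End Helpers.
Lemma final_real (R : realType) (u d T : R) (m : nat) :
  0 <= u -> 0 < d -> d * (1 + u) ^+ m < u ^+ m * T -> m%:R < (1 + u) * ln (T / d).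
Proof.
move=> u0 d0 H.
have T0 : 0 < T.
  rewrite ltNge; apply/negP => T0.
  have : u ^+ m * T <= 0 by apply: mulr_ge0_le0 => //; apply: exprn_ge0.
  have : 0 < d * (1 + u) ^+ m by apply: mulr_gt0 => //; apply: exprn_gt0; lra.
  lra.
case: m H => [|m] H.
  rewrite !expr0 mulr1 mul1r in H.
  apply: mulr_gt0; first lra.
  by apply: ln_gt0; rewrite ltr_pdivlMr // mul1r.
have upos : 0 < u.
  rewrite lt_neqAle u0 andbT; apply/negP => /eqP u00.
  have e0 : u ^+ m.+1 = 0 by rewrite -u00 expr0n.
  rewrite e0 mul0r in H.
  have : 0 < d * (1 + u) ^+ m.+1 by apply: mulr_gt0 => //; apply: exprn_gt0; lra.
  lra.
have u1 : 0 < 1 + u by lra.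
have L1 : ln (d * (1 + u) ^+ m.+1) < ln (u ^+ m.+1 * T).
  by rewrite ltr_ln // posrE; [apply: mulr_gt0 => //; apply: exprn_gt0 | apply: mulr_gt0 => //; apply: exprn_gt0].
rewrite lnM ?posrE ?exprn_gt0 // lnM ?posrE ?exprn_gt0 // !lnXn // in L1.
rewrite ln_div ?posrE //.
have L2 : (1 + u)^-1 <= ln (1 + u) - ln u.
  have h : -1 < - (1 + u)^-1.
    rewrite ltrN2 invf_lt1 //; lra.
  have := le_ln1Dx h.
  have -> : 1 - (1 + u)^-1 = u / (1 + u) by field; apply/negP => /eqP; lra.
  rewrite ln_div ?posrE //; lra.
rewrite -(mulr_natl (ln (1 + u))) -(mulr_natl (ln u)) in L1.
have L3 : m.+1%:R * (1 + u)^-1 < ln T - ln d.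
  apply: le_lt_trans (_ : m.+1%:R * (ln (1 + u) - ln u) < _); last lra.
  by apply: ler_wpM2l.
rewrite -ltr_pdivrMl //; rewrite mulrC; exact: L3.
Qed.

Theorem lemma4p2 (R : realType) (n : nat)
    (f h : 'rV[R]_n -> \bar R) (f' : 'rV[R]_n -> 'rV[R]_n) (Mf Lf phistar : R)
    (x0hat : 'rV[R]_n) (chi lam0 eps : R) (Nbar J : nat)
    (lam : nat -> R) (ctr : nat -> 'rV[R]_n) (mdl : nat -> 'rV[R]_n -> \bar R)
    (x : nat -> 'rV[R]_n) (Nc : nat -> nat) (pb t : nat -> R) (i j : nat) :
  (* standing assumptions *)
  cvx f -> cvx h -> edom h `<=` edom f ->
  (exists xs, (f xs + h xs)%E = phistar%:E) ->
  (forall u, (phistar%:E <= f u + h u)%E) ->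
  0 <= Mf -> 0 <= Lf ->
  (forall u, u \in edom h -> subgrad f u (f' u)) ->
  (forall u v, u \in edom h -> v \in edom h ->
     norm2 (f' u - f' v) <= 2 * Mf + Lf * norm2 (u - v)) ->
  (* inputs of U-PB *)
  x0hat \in edom h -> 0 <= chi < 1 -> 0 < lam0 -> 0 < eps -> (1 <= Nbar)%N ->
  (* a run of U-PB reaching Step 2 of iterations 1..J *)
  UPB_run f h f' phistar x0hat chi lam0 eps Nbar J lam ctr mdl x Nc pb t ->
  (* j is an iteration of the cycle whose first iteration is i *)
  (1 <= i)%N -> (i <= j)%N -> (j <= J)%N -> Nc i = 0%N ->
  (forall k, (i < k <= j)%N -> Nc k <> 0%N) ->
  (* t_j > (1 - chi) eps / 2 *)
  (1 - chi) * eps / 2 < t j ->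
  let u_lam := 4 * lam i * (2 * Mf ^+ 2 + (1 - chi) * eps * Lf) / ((1 - chi) * eps) in
  (j - i)%:R < (1 + u_lam) * ln (4 * t i / ((1 - chi) * eps)).
Proof.
move=> cf ch dom _ _ M0 L0 sg lip x0d hchi l00 e0 N1 run i1 ij jJ Ni Nk tj.
cbv zeta.
set u_lam := 4 * lam i * (2 * Mf ^+ 2 + (1 - chi) * eps * Lf) / ((1 - chi) * eps).
have /andP[chi0 chi1] := hchi.
case: run => [[el1 ec1 en1 cm1 lm1] Hst Htr].
have lpos : forall k, (1 <= k <= J)%N -> 0 < lam k.
  elim=> [//|k IH] /andP[k1 kJ].
  case: k IH k1 kJ => [_ _ _|k IH _ kJ]; first by rewrite el1.
  have Hk : (1 <= k.+1 < J)%N by rewrite kJ.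
  have lk : 0 < lam k.+1 by apply: IH; apply/andP; split => //; exact: ltnW.
  have := Htr _ Hk.
  case: ifP => _; first by case=> ->.
  case: ifP => _; first by case=> -> *; apply: divr_gt0.
  by case=> ->.
have null : forall k, (i <= k < j)%N ->
    [/\ lam k.+1 = lam k, ctr k.+1 = ctr k,
        BU_out f h f' (ctr k) (x k) (mdl k) (lam k) (mdl k.+1) & Nc k.+1 <> 0%N].
  move=> k /andP[ik kj].
  have Nk1 : Nc k.+1 <> 0%N by apply: Nk; rewrite ltnS ik.
  have Hk : (1 <= k < J)%N.
    by apply/andP; split; [apply: leq_trans i1 ik | apply: leq_trans kj jJ].
  have := Htr _ Hk.
  case: ifP => _; first by case=> el ec eN hb; split.
  by case: ifP => _; case=> _ _ hN; move: Nk1; rewrite hN.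
have inv : forall m, (i + m <= j)%N -> lam (i + m)%N = lam i /\ ctr (i + m)%N = ctr i.
  elim=> [|m IH] hm; first by rewrite addn0.
  have hm' : (i + m < j)%N by rewrite -addnS.
  have [l1 c1 _ _] := null (i + m)%N (introT andP (conj (leq_addr m i) hm')).
  rewrite addnS l1 c1; exact: IH (ltnW hm').
have li : 0 < lam i by apply: lpos; rewrite i1 (leq_trans ij jJ).
have u0 : 0 <= u_lam.
  rewrite /u_lam; apply: divr_ge0; last by apply: mulr_ge0; lra.
  apply: mulr_ge0; first lra.
  by apply: addr_ge0; [apply: mulr_ge0; [lra | apply: sqr_ge0] | apply: mulr_ge0; [apply: mulr_ge0; lra | lra]].
set δ := (1 - chi) * eps / 4.
have rec : forall m, (i + m < j)%N ->
    (1 + u_lam) * (t (i + m)%N.+1 - δ) <= u_lam * (t (i + m)%N - δ).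
  move=> m hm.
  have [l1 c1 hb Nk1] := null (i + m)%N (introT andP (conj (leq_addr m i) hm)).
  have [lk ck] := inv m (ltnW hm).
  have k1 : (1 <= i + m <= J)%N.
    by rewrite (leq_trans i1 (leq_addr m i)) (leq_trans (ltnW hm) jJ).
  have k2 : (1 <= (i + m)%N.+1 <= J)%N by rewrite (leq_trans hm jJ).
  have [_ _ _ et0] := Hst _ k1.
  have [_ _ epb et1] := Hst _ k2.
  move: epb; rewrite ifN; last by apply/eqP.
  rewrite /= => epb.
  rewrite l1 c1 lk ck in epb et1; rewrite lk ck in et0 hb.
  exact: (null_step _ _ _ _ _ _ _ _ _ _ _ _ _ _ _ _ _ _ _ cf ch dom M0 L0 sg lip hchi e0 li et0 et1 epb hb).
have iter : forall m, (i + m <= j)%N ->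
    (1 + u_lam) ^+ m * (t (i + m)%N - δ) <= u_lam ^+ m * (t i - δ).
  elim=> [|m IH] hm; first by rewrite addn0 !expr0 !mul1r.
  have hm' : (i + m < j)%N by rewrite -addnS.
  have R1 := rec m hm'.
  rewrite addnS exprSr -mulrA.
  apply: le_trans (_ : (1 + u_lam) ^+ m * (u_lam * (t (i + m)%N - δ)) <= _).
    by apply: ler_wpM2l => //; apply: exprn_ge0; lra.
  have -> : (1 + u_lam) ^+ m * (u_lam * (t (i + m)%N - δ)) = u_lam * ((1 + u_lam) ^+ m * (t (i + m)%N - δ)) by rewrite mulrCA.
  have -> : u_lam ^+ m.+1 * (t i - δ) = u_lam * (u_lam ^+ m * (t i - δ)) by rewrite exprS -mulrA.
  by apply: ler_wpM2l => //; apply: IH; apply: ltnW.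
have d0 : 0 < δ by rewrite /δ; apply: divr_gt0 => //; apply: mulr_gt0; lra.
have tjd : 2 * δ < t j by rewrite /δ; lra.
have := iter (j - i)%N; rewrite subnKC // => /(_ (leqnn j)) It.
have E : 4 * t i / ((1 - chi) * eps) = t i / δ.
  by rewrite /δ; field; apply/andP; split; apply/negP => /eqP; lra.
rewrite E; apply: final_real => //.
have p1 : 0 < (1 + u_lam) ^+ (j - i)%N by apply: exprn_gt0; lra.
have p2 : 0 <= u_lam ^+ (j - i)%N by apply: exprn_ge0.
apply: lt_le_trans (_ : (1 + u_lam) ^+ (j - i)%N * (t j - δ) <= _).
  by rewrite mulrC ltr_pM2l //; lra.
apply: le_trans It _.
by apply: ler_wpM2l => //; lra.
Qed.
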